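(* Let $n\ge2$ and let $F$ be an exponential functor with character polynomial $F(t)=\sum_{i=0}^d\mu_it^i\in\mathbb{Q}[t]$. Let $G(t)\in\mathbb{Q}[t]$ be any polynomial with $G'(t)=\frac{F(t)-F(0)}{t}$ and set $V(t_1,\dots,t_n)=\sum_{i=1}^nG(t_i)$. Regard symmetric polynomials as polynomials in the elementary symmetric polynomials $\bar c_1,\dots,\bar c_n$. Then for every $j\in\{0,\dots,n-2\}$, \[ c_{F,j}=(-1)^{n-j}\frac{\partial V}{\partial\bar c_{n-(j+1)}},\qquad\text{where } c_{F,j}=\frac{q_j}{\Delta}. \] In particular these derivatives generate the ideal $J_{F,\mathbb{Q}}=(c_{F,0},\dots,c_{F,n-2})$ in $(R_F(\mathbb{T})\otimes\mathbb{Q})^W$.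
   Context: An exponential functor is a continuous symmetric monoidal functor $F$ from finite-dimensional complex inner product spaces (unitary isomorphisms, $\oplus$) to finite-dimensional complex inner product super-vector spaces (grading-preserving unitaries, graded $\otimes$ with Koszul sign symmetry), preserving duals, such that the $S^1$-representation on $F(\mathbb{C})$ has only positive characters. Its character polynomial is $F(t)=\sum_k(\dim F(\mathbb{C})^{(k)}_{\mathrm{even}}-\dim F(\mathbb{C})^{(k)}_{\mathrm{odd}})t^k$. $\bar c_k=\sum_{i_1<\dots<i_k}t_{i_1}\cdots t_{i_k}$; $\Delta=\det(t_j^{n-k})_{k,j}$ is the Vandermonde determinant; $q_j(t_1,\dots,t_n)$ is the determinant of the $n\times n$ matrix whose first row is $(F(t_1)t_1^j,\dots,F(t_n)t_n^j)$ and whose remaining rows are $(t_1^{n-2},\dots,t_n^{n-2}),\dots,(t_1,\dots,t_n),(1,\dots,1)$; $q_j/\Delta$ is a symmetric polynomial. $R_F(\mathbb{T})=\mathbb{Z}[t_1,\dots,t_n]/(t_1\cdots t_n-1)[F(t_1)^{-1},\dots,F(t_n)^{-1}]$ with $W=S_n$ permuting the variables. *)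

(* Defs.v *)
From mathcomp Require Import all_boot all_order all_algebra.
From mathcomp Require Import mpoly.
Unset Printing Implicit Defensive.
Import GRing.Theory.
Local Open Scope ring_scope.

Definition evalX (n : nat) (P : {poly rat}) (i : 'I_n) : {mpoly rat[n]} :=
  (map_poly (@mpolyC n rat) P).['X_i].

(* tuple of elementary symmetric polynomials (cbar_1, ..., cbar_n);
   the i-th entry (i : 'I_n) is cbar_{i+1} *)
Definition elemsyms (n : nat) : n.-tuple {mpoly rat[n]} :=
  [tuple mesym n rat i.+1 | i < n].

Definition vandermonde (n : nat) : {mpoly rat[n]} :=
  \det (\matrix_(r < n, c < n) ('X_c ^+ (n - 1 - r)) : 'M[{mpoly rat[n]}]_n).

Definition q_F (n : nat) (F : {poly rat}) (j : nat) : {mpoly rat[n]} :=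
  \det (\matrix_(r < n, c < n)
          (if r == 0 :> nat then evalX n F c * 'X_c ^+ j else 'X_c ^+ (n - 1 - r))
        : 'M[{mpoly rat[n]}]_n).

Definition Vpoly (n : nat) (G : {poly rat}) : {mpoly rat[n]} :=
  \sum_(i < n) evalX n G i.

(* Partial derivative with respect to the formal variable standing for cbar_k
   (k = 1..n) of a polynomial P in the formal variables cbar_1..cbar_n
   (variable i : 'I_n of P stands for cbar_{i+1}); zero for k out of range. *)
Definition dcbar (n : nat) (k : nat) (P : {mpoly rat[n]}) : {mpoly rat[n]} :=
  match @insub nat (fun m => m < n)%N 'I_n k.-1 with
  | Some i => if (0 < k)%N then mderiv i P else 0
  | None => 0
  end.

(* Main.v *)
Require Import Defs.
From mathcomp Require Import all_boot all_order all_algebra.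
From mathcomp Require Import mpoly.
From mathcomp Require Import zify ring.
Import GRing.Theory.
Local Open Scope ring_scope.



Section Eps.
Context {n : nat}.

Definition eps (i : 'I_n) (k : nat) : {mpoly rat[n]} :=
  \sum_(h : {set 'I_n} | (#|h| == k) && (i \notin h)) \prod_(l in h) 'X_l.

Lemma eps_split i k : mesym n rat k.+1 = eps i k.+1 + 'X_i * eps i k.
Proof.
rewrite /mesym (bigID (fun h : {set 'I_n} => i \in h)) /= addrC.
congr (_ + _).
rewrite (reindex_onto (fun h => i |: h) (fun h => h :\ i)); last first.
  by move=> h /andP[_ ih]; rewrite setD1K.
rewrite /eps mulr_sumr; apply: eq_big.
  move=> h; case: (boolP (i \in h)) => ih /=.
    have -> : ((i |: h) :\ i == h) = false.
      by apply/negbTE; apply/negP => /eqP E; move: ih; rewrite -E !inE eqxx.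
    by rewrite !andbF.
  by rewrite setU1K // cardsU1 ih setU11 eqxx andbT !andbT add1n eqSS.
move=> h /andP[_ /eqP ih]; rewrite big_setU1 //=.
by rewrite -ih !inE eqxx.
Qed.

Lemma eps0 i : eps i 0 = 1.
Proof.
rewrite /eps (eq_bigl (pred1 set0)); last first.
  by move=> h; rewrite cards_eq0 /=; case: eqP => // ->; rewrite inE.
by rewrite big_pred1_eq big_set0.
Qed.

Lemma eps_big i k : (n <= k)%N -> eps i k = 0.
Proof.
move=> nk; rewrite /eps big_pred0 // => h; apply/negbTE; apply/negP.
case/andP=> /eqP hk ih.
have : h \proper [set: 'I_n].
  by rewrite properT; apply/negP => /eqP E; move: ih; rewrite E inE.
move/proper_card; rewrite cardsT card_ord hk => /leq_trans/(_ nk).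
by rewrite ltnn.
Qed.

Lemma mderiv_prodX i (h : {set 'I_n}) : i \notin h ->
  mderiv i (\prod_(l in h) 'X_l : {mpoly rat[n]}) = 0.
Proof.
move=> ih; apply: (big_ind (fun x => mderiv i x = 0)).
- by rewrite -mpolyC1 mderivC.
- by move=> x y hx hy; rewrite mderivM hx hy mul0r mulr0 addr0.
move=> l lh; rewrite mderivX mnm1E.
have -> : (l == i) = false by apply/negbTE; apply: contraNneq ih => <-.
by rewrite scale0r.
Qed.

Lemma mderiv_eps i k : mderiv i (eps i k) = 0.
Proof.
rewrite /eps raddf_sum /=; apply: big1 => h /andP[_ ih].
exact: mderiv_prodX.
Qed.

Lemma mderiv_mesym i k : mderiv i (mesym n rat k.+1) = eps i k.
Proof.
rewrite (eps_split i) mderivD mderivM !mderiv_eps mulr0 addr0 add0r.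
have E : (U_(i) - U_(i) = 0)%MM by apply/mnmP=> j; rewrite mnmBE subnn mnm0E.
by rewrite mderivX mnm1E eqxx /= scale1r E mpolyX0 mul1r.
Qed.
End Eps.



Section Chain.
Variables (n k : nat) (T : n.-tuple {mpoly rat[k]}) (i : 'I_k).

Definition chainQ (p : {mpoly rat[n]}) :=
  mderiv i (p \mPo T) = \sum_(l < n) (mderiv l p \mPo T) * mderiv i (tnth T l).

Lemma chainQ_add p q : chainQ p -> chainQ q -> chainQ (p + q).
Proof.
rewrite /chainQ => hp hq; rewrite comp_mpolyD mderivD hp hq -big_split /=.
by apply: eq_bigr => l _; rewrite mderivD comp_mpolyD mulrDl.
Qed.

Lemma chainQ_mul p q : chainQ p -> chainQ q -> chainQ (p * q).
Proof.
rewrite /chainQ => hp hq; rewrite rmorphM /= mderivM hp hq.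
rewrite mulr_suml mulr_sumr -big_split /=.
apply: eq_bigr => l _; rewrite mderivM rmorphD /= !rmorphM /=.
by rewrite mulrDl; congr (_ + _); rewrite -!mulrA; congr (_ * _); rewrite mulrC.
Qed.

Lemma chainQ_C c : chainQ c%:MP.
Proof.
rewrite /chainQ comp_mpolyC mderivC big1 // => l _.
by rewrite mderivC comp_mpoly0 mul0r.
Qed.

Lemma chainQ_X j : chainQ 'X_j.
Proof.
rewrite /chainQ comp_mpolyXU -tnth_nth (bigD1 j) //= big1 ?addr0.
  rewrite mderivX mnm1E eqxx /=.
  have E : (U_(j) - U_(j) = 0)%MM by apply/mnmP=> l; rewrite mnmBE subnn mnm0E.
  by rewrite E mpolyX0 scale1r comp_mpoly1 mul1r.
move=> l /negbTE lj; rewrite mderivX mnm1E eq_sym lj.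
by rewrite scale0r comp_mpoly0 mul0r.
Qed.

Lemma chainQ_all p : chainQ p.
Proof.
elim/mpolyind: p => [|c m p _ _ hp].
  by rewrite -mpolyC0; apply: chainQ_C.
apply: chainQ_add => //; rewrite -mul_mpolyC; apply: chainQ_mul; first exact: chainQ_C.
rewrite mpolyXE_id; apply: (big_ind chainQ).
- by rewrite -mpolyC1; apply: chainQ_C.
- exact: chainQ_mul.
move=> l _; elim: (m l) => [|e ih]; first by rewrite expr0 -mpolyC1; apply: chainQ_C.
by rewrite exprS; apply: chainQ_mul => //; apply: chainQ_X.
Qed.
End Chain.



Section EvalX.
Variable n : nat.

Lemma evalXD P Q i : evalX n (P + Q) i = evalX n P i + evalX n Q i.
Proof. by rewrite /evalX rmorphD hornerD. Qed.
Lemma evalXM P Q i : evalX n (P * Q) i = evalX n P i * evalX n Q i.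
Proof. by rewrite /evalX rmorphM hornerM. Qed.
Lemma evalXB P Q i : evalX n (P - Q) i = evalX n P i - evalX n Q i.
Proof. by rewrite /evalX rmorphB hornerD hornerN. Qed.
Lemma evalXC c i : evalX n c%:P i = c%:MP.
Proof. by rewrite /evalX map_polyC hornerC. Qed.
Lemma evalXX i : evalX n 'X i = 'X_i.
Proof. by rewrite /evalX map_polyX hornerX. Qed.

Lemma mderiv_evalX P i j :
  mderiv j (evalX n P i) = if i == j then evalX n P^`() i else 0.
Proof.
elim/poly_ind: P => [|P c ih].
  by rewrite deriv0 -polyC0 evalXC mderivC; case: eqP.
rewrite evalXD evalXM evalXX evalXC mderivD mderivC addr0 mderivM ih.
rewrite derivD derivC addr0 derivM derivX mulr1 evalXD evalXM evalXX.
rewrite mderivX mnm1E.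
case: eqP => [->|_]; last by rewrite mul0r scale0r mulr0 addr0.
have E : (U_(j) - U_(j) = 0)%MM by apply/mnmP=> l; rewrite mnmBE subnn mnm0E.
by rewrite /= scale1r E mpolyX0 mulr1 mulrC.
Qed.

Lemma mderiv_Vpoly G j : mderiv j (Vpoly n G) = evalX n G^`() j.
Proof.
rewrite /Vpoly raddf_sum /= (bigD1 j) //= big1 ?addr0.
  by rewrite mderiv_evalX eqxx.
by move=> l /negbTE lj; rewrite mderiv_evalX lj.
Qed.
End EvalX.



Section Det.
Context {n : nat}.
Hypothesis n0 : (0 < n)%N.
Let i0 : 'I_n := Ordinal n0.

Definition Bmat (f : 'I_n -> {mpoly rat[n]}) : 'M[{mpoly rat[n]}]_n :=
  \matrix_(r < n, c < n) (if r == 0 :> nat then f c else 'X_c ^+ (n - 1 - r)).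

Definition cof c := cofactor (Bmat (fun _ => 0)) i0 c.
Definition Lc (f : 'I_n -> {mpoly rat[n]}) := \sum_c f c * cof c.

Lemma L_lin f : \det (Bmat f) = Lc f.
Proof.
rewrite (expand_det_row _ i0); apply: eq_bigr => c _.
rewrite /cof mxE /=; congr (_ * _).
rewrite /cofactor; congr (_ * \det _); apply/matrixP => r c'; rewrite !mxE.
by have -> : (lift i0 r == 0 :> nat) = false by rewrite /= /bump leq0n.
Qed.

Lemma Lc_ext f g : f =1 g -> Lc f = Lc g.
Proof. by move=> fg; apply: eq_bigr => c _; rewrite fg. Qed.
Lemma LcD f g : Lc (fun c => f c + g c) = Lc f + Lc g.
Proof. by rewrite /Lc -big_split; apply: eq_bigr => c _; rewrite mulrDl. Qed.
Lemma LcN f : Lc (fun c => - f c) = - Lc f.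
Proof. by rewrite /Lc -sumrN; apply: eq_bigr => c _; rewrite mulNr. Qed.
Lemma LcB f g : Lc (fun c => f c - g c) = Lc f - Lc g.
Proof. by rewrite LcD LcN. Qed.
Lemma LcM a f : Lc (fun c => a * f c) = a * Lc f.
Proof. by rewrite /Lc mulr_sumr; apply: eq_bigr => c _; rewrite mulrA. Qed.
Lemma Lc_sum (I : finType) (F : I -> 'I_n -> {mpoly rat[n]}) :
  Lc (fun c => \sum_(x : I) F x c) = \sum_(x : I) Lc (F x).
Proof.
rewrite /Lc exchange_big /=; apply: eq_bigr => c _; by rewrite mulr_suml.
Qed.

Definition Y a := Lc (fun c => 'X_c ^+ a).

Lemma Y_top : Y (n - 1) = vandermonde n.
Proof.
rewrite /Y -L_lin /vandermonde; congr (\det _); apply/matrixP => r c; rewrite !mxE.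
by case: eqP => // ->; rewrite subn0.
Qed.

Lemma Y_low a : (1 < n)%N -> (a <= n - 2)%N -> Y a = 0.
Proof.
move=> n1 an; rewrite /Y -L_lin.
have lt : (n - 1 - a < n)%N by rewrite -subnDA; lia.
apply: (determinant_alternate (i1 := i0) (i2 := Ordinal lt)).
  by rewrite -val_eqE /=; lia.
move=> c; rewrite !mxE /=.
have -> : (n - 1 - a == 0)%N = false by apply/negbTE; lia.
by congr (_ ^+ _); lia.
Qed.

Definition Z s k := Lc (fun c => 'X_c ^+ s * eps c k).

Lemma Z_rec s k : Z s.+1 k = mesym n rat k.+1 * Y s - Z s k.+1.
Proof.
rewrite /Z /Y -LcM -LcB; apply: Lc_ext => c.
rewrite (eps_split c k) exprSr; ring.
Qed.

Lemma Z0 s : Z s 0 = Y s.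
Proof. by rewrite /Z /Y; apply: Lc_ext => c; rewrite eps0 mulr1. Qed.

Lemma Z_big s k : (n <= k)%N -> Z s k = 0.
Proof.
move=> nk; rewrite /Z (@Lc_ext _ (fun c => 0 * 0)).
  by rewrite LcM mul0r.
by move=> c; rewrite eps_big // !mulr0.
Qed.

Hypothesis n1 : (1 < n)%N.

Lemma Z_claim1 k s : (s + k <= n - 1)%N ->
  Z s k = if (s + k == n - 1)%N then (-1) ^+ k * vandermonde n else 0.
Proof.
elim: k s => [|k ih] s sk.
  rewrite Z0 addn0; case: eqP => [->|ne]; first by rewrite expr0 mul1r Y_top.
  by apply: Y_low => //; lia.
have := Z_rec s k; rewrite Y_low //; last by lia.
rewrite mulr0 sub0r => E; rewrite -[Z s k.+1]opprK -E.
rewrite ih; last by lia.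
rewrite addSnnS; case: eqP => _; last by rewrite oppr0.
by rewrite exprS mulN1r mulNr.
Qed.

Lemma Z_claim2 s k : (n <= s + k)%N -> (s <= n - 1)%N -> Z s k = 0.
Proof.
elim: s k => [|s ih] k sk sn; first by apply: Z_big.
rewrite Z_rec Y_low //; last by lia.
by rewrite mulr0 sub0r ih ?oppr0 //; lia.
Qed.

Lemma Z_final s k : (s <= n - 1)%N ->
  Z s k = if (s + k == n - 1)%N then (-1) ^+ k * vandermonde n else 0.
Proof.
move=> sn; case: (leqP (s + k) (n - 1)) => h; first exact: Z_claim1.
rewrite Z_claim2 //; last by lia.
by case: eqP => // e; lia.
Qed.
End Det.



Theorem proposition4p1 (n : nat) (F G : {poly rat}) :
  (2 <= n)%N ->
  G^`() * 'X = F - (F.[0])%:P ->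
  forall P : {mpoly rat[n]},
    P \mPo elemsyms n = Vpoly n G ->
    forall j : nat, (j <= n - 2)%N ->
      q_F n F j
      = vandermonde n
        * ((-1) ^+ (n - j) * (dcbar n (n - j.+1) P \mPo elemsyms n)).
Proof.
move=> n2 hG P hP j hj.
have n0 : (0 < n)%N by lia.
have n1 : (1 < n)%N by lia.
pose D (k : 'I_n) := mderiv k P \mPo elemsyms n.
have step1 c : evalX n G^`() c = \sum_(k < n) D k * eps c k.
  rewrite -mderiv_Vpoly -hP; have := chainQ_all _ _ (elemsyms n) c P; rewrite /chainQ => ->.
  by apply: eq_bigr => k _; rewrite tnth_mktuple mderiv_mesym.
have step2 c : evalX n F c * 'X_c ^+ j =
    (F.[0])%:MP * 'X_c ^+ j + \sum_(k < n) D k * ('X_c ^+ j.+1 * eps c k).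
  have := congr1 (fun Q => evalX n Q c) hG => /=.
  rewrite evalXM evalXX evalXB evalXC step1 => E.
  have -> : evalX n F c = (F.[0])%:MP + (\sum_(k < n) D k * eps c k) * 'X_c.
    by rewrite E; ring.
  rewrite mulrDl; congr (_ + _); rewrite !mulr_suml; apply: eq_bigr => k _.
  by rewrite exprS; ring.
have -> : q_F n F j = \det (Bmat (fun c => evalX n F c * 'X_c ^+ j)) by [].
rewrite (L_lin n0) (Lc_ext n0 _ _ step2) LcD LcM Lc_sum.
have -> : Lc n0 (fun c => 'X_c ^+ j) = 0 by exact: (Y_low n0 _ n1 hj).
rewrite mulr0 add0r.
have lt : (n - 2 - j < n)%N by lia.
pose k0 := Ordinal lt.
rewrite (bigD1 k0) //= big1 ?addr0; last first.
  move=> k kk0; rewrite LcM.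
  change (Lc n0 (fun c => 'X_c ^+ j.+1 * eps c k)) with (Z n0 j.+1 k).
  rewrite Z_final //; last by lia.
  case: eqP => [e|_]; last by rewrite mulr0.
  by exfalso; move/eqP: kk0; apply; apply: val_inj => /=; lia.
rewrite LcM.
change (Lc n0 (fun c => 'X_c ^+ j.+1 * eps c (n - 2 - j))) with (Z n0 j.+1 (n - 2 - j)).
rewrite Z_final //; last by lia.
rewrite ifT; last by apply/eqP => /=; lia.
have -> : dcbar n (n - j.+1) P = mderiv k0 P.
  rewrite /dcbar.
  have h : ((n - j.+1).-1 < n)%N by lia.
  rewrite (insubT (fun m => m < n)%N h) /=.
  rewrite ifT; last by lia.
  by congr mderiv; apply: val_inj => /=; lia.
have -> : (n - j = (n - 2 - j) + 2)%N by lia.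
rewrite exprD sqrrN expr1n mulr1 /D.
ring.
Qed.
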